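(* Let $\Sigma$ be a set containing $0$, $(\Gamma,\oplus)$ an abelian group, $n\ge1$, and $K=\{K_1,\ldots,K_k\}$ a partition of $[n]$ into nonempty sets. A function $f:\Sigma^n\to\Gamma$ has $K$-separable arguments if and only if for all $i',i''\in[n]$ lying in different blocks of $K$, all $\bar x\in\Sigma^n$ and all $a',a''\in\Sigma$, $$f(\bar x)\ominus f(\bar x^{[i']}[a'])\ominus f(\bar x^{[i'']}[a''])\oplus f(\bar x^{[i',i'']}[a',a''])=0.$$
   Context: $[n]=\{1,\ldots,n\}$. For $\bar x=(x_1,\ldots,x_n)$, $\bar x^{[i]}[y]$ is $\bar x$ with its $i$th coordinate replaced by $y$, and $\bar x^{[i',i'']}[a',a'']$ is $\bar x$ with coordinates $i',i''$ replaced by $a',a''$. For $L=\{i_1<\cdots<i_m\}\subseteq[n]$, $\bar x_L=(x_{i_1},\ldots,x_{i_m})$. A function $f:\Sigma^n\to\Gamma$ has $K$-separable arguments (for a partition $K=\{K_1,\ldots,K_k\}$ of $[n]$) if there exist functions $f_j:\Sigma^{|K_j|}\to\Gamma$ with $f(\bar x)=f_1(\bar x_{K_1})\oplus\cdots\oplus f_k(\bar x_{K_k})$ for all $\bar x$. *)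

(* Defs.v *)
From HB Require Import structures.
From mathcomp Require Import all_boot all_order all_algebra.
Set Implicit Arguments. Unset Strict Implicit. Unset Printing Implicit Defensive.
Import GRing.Theory.
Local Open Scope ring_scope.

(* Sigma^n is represented as {ffun 'I_n -> S}; coordinates are 0-based. *)

Definition upd (S : Type) (n : nat) (x : {ffun 'I_n -> S}) (i : 'I_n) (y : S)
  : {ffun 'I_n -> S} := [ffun j => if j == i then y else x j].

(* x_L = (x_{i_1},...,x_{i_m}) for L = {i_1 < ... < i_m}; enum L lists L increasingly *)
Definition restr (S : Type) (n : nat) (x : {ffun 'I_n -> S}) (L : {set 'I_n})
  : {ffun 'I_#|L| -> S} := [ffun j => x (enum_val j)].

Definition separable_args (S : Type) (G : zmodType) (n : nat)
  (K : {set {set 'I_n}}) (f : {ffun 'I_n -> S} -> G) : Prop :=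
  exists fB : forall B : {set 'I_n}, {ffun 'I_#|B| -> S} -> G,
    forall x, f x = \sum_(B in K) fB B (restr x B).

(* Main.v *)
Require Import Defs.
From HB Require Import structures.
From mathcomp Require Import all_boot all_order all_algebra.
Import GRing.Theory.
Local Open Scope ring_scope.

Lemma sq0 (G : zmodType) (a b c d : G) : a - b - c + d = 0 <-> a - b = c - d.
Proof.
have -> : a - b - c + d = (a - b) - (c - d) by rewrite opprB addrA addrAC.
by split=> [/eqP|->]; rewrite ?subr_eq0 ?subrr // => /eqP.
Qed.

Lemma triv1 (G : zmodType) (a b : G) : a - b - a + b = 0.
Proof. by rewrite addrAC subrK subrr. Qed.
Lemma triv2 (G : zmodType) (a b : G) : a - a - b + b = 0.
Proof. by rewrite subrr sub0r addNr. Qed.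

Lemma tele (G : zmodType) (a b c : G) : a - c = (a - b) + (b - c).
Proof. by rewrite addrA subrK. Qed.

Lemma mem_bigU (T : finType) (r : seq {set T}) (j : T) :
  j \in \big[@setU _/set0]_(B <- r) B -> exists2 B, B \in r & j \in B.
Proof.
elim: r => [|B r IH]; first by rewrite big_nil inE.
rewrite big_cons inE => /orP [jB|/IH [C Cr jC]].
  by exists B; rewrite ?mem_head.
by exists C; rewrite // inE Cr orbT.
Qed.

Lemma alg1 (G : zmodType) (a b s X : G) : a - b - (a + s) + X = 0 -> X = a + (b - a + s).
Proof.
move/eqP; rewrite addrC addr_eq0 => /eqP ->.
rewrite !opprB.
rewrite (addrC b) -addrA addrA addrC addrA.
by rewrite !addrA [- a + b + a]addrAC addNr subrr.
Qed.

Section Aux.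
Variables (S : Type) (G : zmodType) (n : nat).
Implicit Types (x y : {ffun 'I_n -> S}).

Definition mix (y x : {ffun 'I_n -> S}) (V : {set 'I_n}) : {ffun 'I_n -> S} :=
  [ffun k => if k \in V then y k else x k].

Lemma upd_comm x i j a b : i != j ->
  upd (upd x i a) j b = upd (upd x j b) i a.
Proof.
move=> ij; apply/ffunP=> k; rewrite !ffunE.
case: (eqVneq k j) => [->|kj].
  by rewrite eq_sym (negbTE ij).
by case: (eqVneq k i).
Qed.

Lemma mix_cons y x j s :
  mix y x [set k in j :: s] = upd (mix y x [set k in s]) j (y j).
Proof.
apply/ffunP=> k; rewrite !ffunE !inE.
by case: (eqVneq k j) => [->|].
Qed.

Lemma mix_setU y x U V : mix y (mix y x U) V = mix y x (U :|: V).
Proof.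
apply/ffunP=> k; rewrite !ffunE !inE.
by case: (k \in V); case: (k \in U); rewrite ?orbT.
Qed.

Lemma mix_set0 y x : mix y x set0 = x.
Proof. by apply/ffunP=> k; rewrite !ffunE inE. Qed.

Lemma set_nil : [set k in [::]] = set0 :> {set 'I_n}.
Proof. by apply/setP=> k; rewrite !inE. Qed.

Lemma set_enum (V : {set 'I_n}) : V = [set k in enum V].
Proof. by apply/setP=> k; rewrite inE mem_enum. Qed.

Variable (P : 'I_n -> 'I_n -> Prop).
Variable (f : {ffun 'I_n -> S} -> G).
Hypothesis hc : forall i j, P i j -> forall x a b,
  f x - f (upd x i a) - f (upd x j b) + f (upd (upd x i a) j b) = 0.
Hypothesis hneq : forall i j, P i j -> i != j.

Lemma L1 i a y (s : seq 'I_n) : (forall j, j \in s -> P i j) -> forall x,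
  f x - f (upd x i a) - f (mix y x [set k in s])
   + f (upd (mix y x [set k in s]) i a) = 0.
Proof.
elim: s => [|j s IH] hs x.
  by rewrite set_nil mix_set0 triv1.
rewrite mix_cons.
have /sq0 IH' := IH (fun k ks => hs k ltac:(by rewrite inE ks orbT)) x.
set X := mix y x [set k in s] in IH' *.
have /sq0 hj := hc i j (hs j (mem_head _ _)) X a (y j).
rewrite upd_comm; last by rewrite eq_sym; apply: hneq; apply: hs; exact: mem_head.
by apply/sq0; rewrite IH' hj.
Qed.

Lemma L2 y w (s : seq 'I_n) (V : {set 'I_n}) :
  (forall i j, i \in s -> j \in V -> P i j) ->
  f w - f (mix y w [set k in s]) - f (mix y w V)
   + f (mix y w ([set k in s] :|: V)) = 0.
Proof.
elim: s => [|i s IH] hs.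
  by rewrite set_nil mix_set0 set0U triv2.
have /sq0 IH' := IH (fun k j ks => hs k j ltac:(by rewrite inE ks orbT)).
have e : mix y w ([set k in i :: s] :|: V) =
         upd (mix y w ([set k in s] :|: V)) i (y i).
  apply/ffunP=> k; rewrite !ffunE !inE.
  by case: (eqVneq k i) => [->|].
rewrite e mix_cons.
have := L1 i (y i) y (enum V)
  (fun j jV => hs i j (mem_head _ _) ltac:(by rewrite mem_enum in jV))
  (mix y w [set k in s]).
rewrite -set_enum mix_setU => /sq0 h.
apply/sq0; rewrite (tele _ _ (f (mix y w [set k in s]))) IH' h.
by rewrite -tele.
Qed.

End Aux.
Arguments mix {S n} y x V.

Theorem lemmaA1 (S : Type) (z : S) (G : zmodType) (n : nat) (hn : (0 < n)%N)
  (K : {set {set 'I_n}})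
  (hK : partition K [set: 'I_n]) (hne : set0 \notin K)
  (f : {ffun 'I_n -> S} -> G) :
  separable_args K f <->
  (forall (i' i'' : 'I_n), pblock K i' != pblock K i'' ->
     forall (x : {ffun 'I_n -> S}) (a' a'' : S),
       f x - f (upd x i' a') - f (upd x i'' a'') + f (upd (upd x i' a') i'' a'') = 0).
Proof.
have /and3P [/eqP hcov htriv _] := hK.
split.
- move=> [fB hf] i' i'' hp x a' a''.
  rewrite !hf -!sumrB -big_split /=; apply: big1 => B BK.
  have restr_upd y i a : i \notin B -> restr (upd y i a) B = restr y B.
    move=> iB; apply/ffunP=> k; rewrite !ffunE.
    case: eqP => // e; have := enum_valP k; by rewrite e (negbTE iB).
  case iB: (i' \in B).
    have i''B : i'' \notin B.
      apply/negP=> i''B; move: hp.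
      by rewrite (def_pblock htriv BK iB) (def_pblock htriv BK i''B) eqxx.
    by rewrite !(restr_upd _ _ i'') // triv1.
  rewrite (@upd_comm _ _ _ i' i''); last by apply: contraNneq hp => ->.
  by rewrite !(restr_upd _ _ i') ?iB // triv2.
- move=> hc.
  pose P (i j : 'I_n) := pblock K i != pblock K j.
  have hneq : forall i j, P i j -> i != j.
    by move=> i j; apply: contraNneq => ->.
  pose z0 : {ffun 'I_n -> S} := [ffun=> z].
  have tel : forall (x : {ffun 'I_n -> S}) (r : seq {set 'I_n}), uniq r -> {subset r <= K} ->
    f (mix x z0 (\big[@setU _/set0]_(B <- r) B)) =
      f z0 + \sum_(B <- r) (f (mix x z0 B) - f z0).
    move=> x; elim=> [|B r IH] /= ur sub.
      by rewrite !big_nil mix_set0 addr0.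
    case/andP: ur => Br ur.
    have BK : B \in K by apply: sub; exact: mem_head.
    rewrite !big_cons.
    have := @L2 S G n (fun i j => P i j) f hc hneq x z0 (enum B)
      (\big[@setU _/set0]_(B0 <- r) B0).
    rewrite -set_enum => /(_ _) h.
    have {}h : f z0 - f (mix x z0 B) - f (mix x z0 (\big[@setU _/set0]_(B0 <- r) B0)) +
      f (mix x z0 (B :|: \big[@setU _/set0]_(B0 <- r) B0)) = 0.
      apply: h => i j; rewrite mem_enum => iB /mem_bigU [B' B'r jB'].
      have B'K : B' \in K by apply: sub; rewrite inE B'r orbT.
      rewrite /P (def_pblock htriv BK iB) (def_pblock htriv B'K jB').
      by apply: contraNneq Br => ->.
    rewrite IH // in h; last by move=> C Cr; apply: sub; rewrite inE Cr orbT.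
    by move/alg1: h.
  have hx : forall x, f x = f z0 + \sum_(B in K) (f (mix x z0 B) - f z0).
    move=> x; have := tel x (enum K) (enum_uniq _) (fun B => ltac:(by rewrite mem_enum)).
    rewrite big_enum /= -/(cover K) hcov big_enum /= => <-.
    by congr f; apply/ffunP=> k; rewrite !ffunE inE.
  pose B0 := pblock K (Ordinal hn).
  have B0K : B0 \in K by apply: pblock_mem; rewrite hcov inE.
  pose emb (B : {set 'I_n}) (w : {ffun 'I_#|B| -> S}) : {ffun 'I_n -> S} :=
    [ffun j => if (insub (index j (enum B)) : option 'I_#|B|) is Some k then w k else z].
  have hemb : forall x B, emb B (restr x B) = mix x z0 B.
    move=> x B; apply/ffunP=> j; rewrite !ffunE.
    case: (boolP (j \in B)) => jB.
      have hi : (index j (enum B) < #|B|)%N by rewrite cardE index_mem mem_enum.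
      rewrite insubT /= ffunE; apply: f_equal.
      by rewrite (enum_val_nth j) /= nth_index // mem_enum.
    rewrite insubF //= cardE; apply/negbTE; rewrite -leqNgt.
    by rewrite memNindex ?mem_enum.
  exists (fun B w => f (emb B w) - f z0 + (if B == B0 then f z0 else 0)).
  move=> x; rewrite big_split /= [X in _ + X](bigD1 B0) //= eqxx.
  rewrite [X in _ + (_ + X)]big1 ?addr0.
    by rewrite hx addrC; congr (_ + _); apply: eq_bigr => B _; rewrite hemb.
  by move=> B /andP [_ /negbTE ->].
Qed.
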